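(* Let $x \geq 1$ be an integer. For $m \geq 1$ let $N(m,x)$ denote the number of binary words of length $m$ that contain none of the patterns in $\mathcal{T}_x = \{0\mathbf{1}^y0,\ 1\mathbf{0}^y1 : 1 \leq y \leq x\}$ as a substring of consecutive bits, and set by convention $N(m,x) \triangleq 2$ for all integers $m \leq 1$. Then for every $m \geq 2$, $$N(m,x) = N(m-1,x) + N(m-x-1,x).$$
   Context: $\mathbf{0}^r$ (resp. $\mathbf{1}^r$) denotes a run of $r$ consecutive $0$'s (resp. $1$'s). A pattern is contained in a word if it appears as a contiguous block of consecutive bits. Note that for $m=1$ the convention value $2$ coincides with the actual count of binary words of length $1$. *)

(* Defs.v *)
From mathcomp Require Import all_boot all_order all_algebra.
Set Implicit Arguments. Unset Strict Implicit. Unset Printing Implicit Defensive.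

(* pattern 0 1^y 0  (false = bit 0, true = bit 1) *)
Definition pat010 (y : nat) : seq bool := [:: false] ++ nseq y true ++ [:: false].
Definition pat101 (y : nat) : seq bool := [:: true] ++ nseq y false ++ [:: true].

Definition avoidsT (x : nat) (w : seq bool) : bool :=
  all (fun y => ~~ infix (pat010 y) w && ~~ infix (pat101 y) w) (iota 1 x).

Definition Ncount (m x : nat) : nat :=
  #|[set w : m.-tuple bool | avoidsT x w]|.

Definition N (m : int) (x : nat) : nat :=
  match m with
  | Posz n => if (n <= 1)%N then 2 else Ncount n x
  | Negz _ => 2
  end.

(* Main.v *)
Require Import Defs.
From mathcomp Require Import all_boot all_order all_algebra.
From mathcomp Require Import zify.

Fixpoint words n : seq (seq bool) :=
  if n is n'.+1 then map (cons true) (words n') ++ map (cons false) (words n')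
  else [:: [::]].


Lemma mem_words n w : (w \in words n) = (size w == n).
Proof.
elim: n w => [|n IH] [|b w] //=; rewrite mem_cat.
- by apply/negbTE/negP => /orP[] /mapP[? _].
- have i1 : injective (cons true) by move=> ? ? [].
  have i2 : injective (cons false) by move=> ? ? [].
  case: b; rewrite ?(mem_map i1) ?(mem_map i2) IH eqSS.
  + by case: eqP => //= _; apply/negbTE/negP => /mapP[? _].
  + by rewrite orbC; case: eqP => //= _; apply/negbTE/negP => /mapP[? _].
Qed.

Lemma uniq_words n : uniq (words n).
Proof.
elim: n => [|n IH] //=.
have i1 : injective (cons true) by move=> ? ? [].
have i2 : injective (cons false) by move=> ? ? [].
rewrite cat_uniq !map_inj_uniq // IH /= andbT; apply/hasPn => w /mapP[? _ ->].
by apply/negP => /mapP[? _].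
Qed.


Lemma card_words n (P : pred (seq bool)) :
  #|[set w : n.-tuple bool | P w]| = count P (words n).
Proof.
rewrite cardsE cardE /enum_mem size_filter.
have -> : count (mem [pred w : n.-tuple bool | P w]) (Finite.enum (n.-tuple bool))
   = count P (map val (Finite.enum (n.-tuple bool))).
  by rewrite count_map; apply: eq_count => t; rewrite !inE.
apply/permP/uniq_perm.
- rewrite map_inj_uniq; [by rewrite -enumT enum_uniq|by move=> a b /val_inj].
- exact: uniq_words.
move=> w; rewrite mem_words; apply/mapP/idP => [[t _ ->]|/eqP H].
  by rewrite size_tuple.
have Hs : size w == n by rewrite H.
by exists (Tuple Hs) => //; rewrite -enumT mem_enum.
Qed.

Lemma count_bij (T U : eqType) (s1 : seq T) (s2 : seq U) (P : pred T) (Q : pred U) (f : T -> U) :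
  uniq s1 -> uniq s2 -> {in [pred t | (t \in s1) && P t] &, injective f} ->
  (forall t, t \in s1 -> P t -> (f t \in s2) && Q (f t)) ->
  (forall u, u \in s2 -> Q u -> exists2 t, (t \in s1) && P t & u = f t) ->
  count P s1 = count Q s2.
Proof.
move=> u1 u2 inj fw bw; rewrite -!size_filter.
rewrite -(size_map f); apply/perm_size/uniq_perm.
- rewrite map_inj_in_uniq ?filter_uniq // => a b; rewrite !mem_filter => ha hb.
  by apply: inj; rewrite inE andbC.
- exact: filter_uniq.
move=> u; rewrite mem_filter; apply/mapP/idP => [[t]|/andP[qu su]].
  rewrite mem_filter => /andP[pt st] ->; by rewrite andbC fw.
have [t /andP[st pt] ->] := bw u su qu; by exists t; rewrite // mem_filter pt.
Qed.
Definition goodF x (w : seq bool) :=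
  all (fun y => ~~ prefix (nseq y (head false w) ++ [:: ~~ head false w]) w) (iota 1 x).

Lemma step x c w : avoidsT x (c :: w) = avoidsT x w && ((c == head false w) || goodF x w).
Proof.
rewrite /avoidsT /goodF.
rewrite (eq_all (a2 := fun y => (~~ infix (pat010 y) w && ~~ infix (pat101 y) w) && (~~ prefix (pat010 y) (c::w) && ~~ prefix (pat101 y) (c::w)))); last first.
  by move=> y; rewrite !infix_consl; case: prefix; case: prefix; case: infix; case: infix.
rewrite all_predI; congr andb.
have allT : forall (P : pred nat), (forall y, P y.+1) -> all P (iota 1 x).
  by move=> P HP; apply/allP => y; rewrite mem_iota; case: y.
case: w => [|a w].
  rewrite allT; last by move=> y; case: c.
  by rewrite allT ?orbT.
case: c; case: a => /=.
- by apply: allT => y.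
- by [].
- by apply: eq_all => y; rewrite andbT.
- by apply: allT => y.
Qed.

Lemma count_split (P H G : pred (seq bool)) (s : seq (seq bool)) :
  count (fun w => P w && (H w || G w)) s + count (fun w => P w && (~~ H w || G w)) s
  = count P s + count (fun w => P w && G w) s.
Proof.
elim: s => //= w s IH.
have E : forall a b c d : nat, a + b + (c + d) = (a + c) + (b + d) by move=> *; lia.
rewrite E IH; case: (P w); case: (H w); case: (G w) => /=; lia.
Qed.

Lemma avoids_nil x : avoidsT x [::].
Proof. by apply/allP => y _. Qed.

Lemma prefix_nth (p w : seq bool) i : prefix p w -> i < size p -> nth false w i = nth false p i.
Proof. by move=> /prefixP [s ->] hi; rewrite nth_cat hi. Qed.

Lemma goodF_nth x w : (forall i, i <= x -> i < size w -> nth false w i = head false w) -> goodF x w.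
Proof.
move=> H; apply/allP => y; rewrite mem_iota => /andP[y1 yx].
set a := head false w in H *.
apply/negP => Hp.
have Hs : size (nseq y a ++ [:: ~~ a]) <= size w.
  by case/prefixP: Hp => s ->; rewrite [X in _ <= X]size_cat leq_addr.
rewrite size_cat size_nseq /= addn1 in Hs.
have := prefix_nth _ _ y Hp; rewrite size_cat size_nseq /= addn1 ltnSn nth_cat size_nseq ltnn subnn /=.
rewrite H //; last by lia.
Qed.

Lemma goodF_nil x : goodF x [::].
Proof. by apply: goodF_nth. Qed.

Lemma goodF_take a j u : (forall y, 1 <= y <= j -> ~~ prefix (nseq y a ++ [:: ~~ a]) (a :: u)) ->
  j <= size u -> take j u = nseq j a.
Proof.
elim: j u => [|j IH] [|b u] H hs //.
have hb := H 1 isT.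
have E : b = a by clear IH H hs; move: hb; case: a; case: b => /=; case: u.
subst b; rewrite /=; congr (_ :: _); apply: IH => [y /andP[y1 yj]|]; last by rewrite /= in hs; lia.
have h := H y.+1.
rewrite (_ : nseq y.+1 a ++ [:: ~~a] = a :: (nseq y a ++ [:: ~~a])) // prefix_cons eqxx /= in h.
by apply: h; lia.
Qed.

Lemma valid_nseq x b j z : avoidsT x z -> (z == [::]) || (head false z == b) ->
  avoidsT x (nseq j b ++ z).
Proof.
move=> hz hh; elim: j => [|j IH] //=.
rewrite step IH /=; case: j {IH} => [|j] /=; last by rewrite eqxx.
by case: z hz hh => [|c z] /= _; [rewrite goodF_nil orbT | rewrite eq_sym => ->].
Qed.

Lemma valid_suffix x s1 s2 : avoidsT x (s1 ++ s2) -> avoidsT x s2.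
Proof. by elim: s1 => //= c s IH; rewrite step => /andP[/IH]. Qed.

Lemma countA x n : count (avoidsT x) (words n.+1) =
  count (avoidsT x) (words n) + count (fun w => avoidsT x w && goodF x w) (words n).
Proof.
rewrite /= count_cat !count_map -(count_split _ (fun w => head false w)).
by congr (_ + _); apply: eq_count => w; rewrite /preim /= step //.
Qed.

Lemma B_small x n : 1 <= n <= x ->
  count (fun w => avoidsT x w && goodF x w) (words n) = 2.
Proof.
case/andP=> n1 nx.
rewrite -(count_bij _ _ [:: true; false] _ predT _ (fun b => nseq n b)) //.
- exact: uniq_words.
- case: n n1 {nx} => [//|n] _ a b _ _ /=; by case.
- move=> b _ _; rewrite mem_words size_nseq eqxx /=.
  have -> : avoidsT x (nseq n b) by rewrite -[nseq n b]cats0 valid_nseq ?avoids_nil.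
  rewrite /=.
  apply: goodF_nth => i _; rewrite size_nseq => hi; rewrite nth_nseq hi.
  by case: n n1 nx hi.
- move=> u; rewrite mem_words => /eqP hs /andP[hv hg].
  case: u hs hv hg => [hs|a u] /=; first by rewrite -hs in n1.
  case=> hs hv hg.
  exists a; first by case: (a).
  rewrite -hs /=; congr (_ :: _).
  rewrite -[LHS](take_size u); apply: goodF_take => // y /andP[y1 yu].
  have hux : (size u < x)%N by rewrite hs.
  by move/allP: hg => hg; apply: (hg y); clear hg hv; rewrite mem_iota; apply/andP; split; [lia | rewrite add1n ltnS; apply: leq_trans yu (ltnW hux)].
Qed.

Lemma B_big x k : 1 <= k ->
  count (fun w => avoidsT x w && goodF x w) (words (x + k)) = count (avoidsT x) (words k).
Proof.
move=> k1; symmetry.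
apply: (count_bij _ _ _ _ _ _ (fun z => nseq x (head false z) ++ z)).
- exact: uniq_words.
- exact: uniq_words.
- by move=> a b _ _ /(congr1 (drop x)); rewrite !drop_size_cat ?size_nseq.
- move=> z; rewrite mem_words => /eqP hz hv.
  case: z hz hv => [|c z] hz hv; first by rewrite -hz in k1.
  rewrite mem_words size_cat size_nseq hz eqxx valid_nseq ?eqxx ?orbT //=.
  apply: goodF_nth => i ix _.
  have -> : head false (nseq x c ++ c :: z) = c by case: (x).
  rewrite nth_cat size_nseq; case: ltnP => hi; first by rewrite nth_nseq hi.
  by have -> : i - x = 0 by lia.
- move=> u; rewrite mem_words => /eqP hs /andP[hv hg].
  case: u hs hv hg => [|a u] hs hv hg; first by move: hs => /= hs; lia.
  have ht : take x u = nseq x a.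
    apply: goodF_take => [y /andP[y1 yu]|]; last by rewrite /= in hs; lia.
    by move/allP: hg => hg; apply: (hg y); rewrite mem_iota; apply/andP; split; lia.
  set r := drop x u.
  have Hu : a :: u = nseq x a ++ a :: r.
    rewrite -[u](cat_take_drop x) ht -/r.
    by elim: (x) => //= n ->.
  have Hd : drop x (a :: u) = a :: r by rewrite Hu drop_size_cat ?size_nseq.
  exists (drop x (a :: u)); last by rewrite Hd /= -Hu.
  rewrite mem_words size_drop hs.
  apply/andP; split; first by apply/eqP; lia.
  by rewrite Hu in hv; rewrite Hd; apply: valid_suffix hv.
Qed.

Lemma Nle1 x (z : int) : (z <= 1)%R -> N z x = 2.
Proof. by case: z => [j|j] //=; rewrite lez_nat => ->. Qed.

Lemma NA x p : 1 <= p -> N (Posz p) x = count (avoidsT x) (words p).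
Proof.
move=> p1; rewrite /N; case: ifP => hp.
  have -> : p = 1 by lia.
  by rewrite /= !step avoids_nil goodF_nil !orbT.
by rewrite /Ncount card_words.
Qed.

Local Open Scope ring_scope.

Theorem theorem1 (x : nat) (m : int) :
  (1 <= x)%N -> 2 <= m ->
  N m x = (N (m - 1) x + N (m - x%:Z - 1) x)%N.
Proof.
move=> x1; case: m => [n|n] hm; last by [].
rewrite lez_nat in hm.
have [p Hp] : exists p, n = p.+1 by exists n.-1; lia.
subst n; have p1 : (1 <= p)%N by lia.
rewrite (_ : Posz p.+1 - 1 = Posz p); last by lia.
rewrite NA // countA NA //; congr (_ + _)%N.
case: (leqP p x) => hpx.
  by rewrite Nle1; [rewrite B_small ?p1 | lia].
rewrite (_ : Posz p.+1 - x%:Z - 1 = Posz (p - x)); last by lia.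
rewrite NA; last by lia.
by rewrite -B_big ?subnKC //; [lia | lia].
Qed.
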